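(* Let $p$ be an odd prime, $k$ algebraically closed of characteristic $p$, $d=p^2+1$, and let $X$ be the Artin–Schreier curve $y^p-y=-x^{d}-x^{d/2+p}$ over $k$. Let $k_0$ be an integer with $0\le k_0<\frac{p-1}{2}$ and $l$ an integer with $0\le l\le \frac{d(p/2-1-k_0)}{p}$. Then there exists $y^mx^ndx\in\mathcal B_X$ with $m<\frac{p-1}{2}$ such that the largest term of $\mathcal C_X(y^mx^ndx)$ is $y^{k_0}x^ldx$.
   Context: $\mathcal C_X$ is the Cartier operator on $H^0(X,\Omega^1_X)$: the $p^{-1}$-semilinear map with $\mathcal C_X(f^p\alpha+\beta)=f\,\mathcal C_X(\alpha)+\mathcal C_X(\beta)$, $\mathcal C_X(x^{p-1}dx)=dx$, $\mathcal C_X(x^ndx)=0$ for $n\not\equiv-1\pmod p$. For an Artin–Schreier curve $y^p-y=f$ with $f\in k[x]$ of degree $D$ prime to $p$, the set $$\mathcal B_X=\left\{y^ix^jdx:\ 0\le i\le p-2,\ 0\le j\le \left\lceil\tfrac{(p-i-1)D}{p}\right\rceil-2\right\}$$ is a $k$-basis of $H^0(X,\Omega^1_X)$. Order $\mathcal B_X$ lexicographically with $y>x$: $y^ix^jdx>y^ax^bdx$ iff $i>a$, or $i=a$ and $j>b$. The ''largest term'' of a nonzero differential $\omega\in H^0(X,\Omega^1_X)$ is the largest element of $\mathcal B_X$ appearing with nonzero coefficient when $\omega$ is written in the basis $\mathcal B_X$. *)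

(* Defs.v *)
From mathcomp Require Import all_boot all_algebra.
Import GRing.Theory.
Local Open Scope ring_scope.

(* Model: the affine coordinate ring A = k[x,y]/(y^p - y - f(x)) of the
   Artin-Schreier curve, elements represented by bivariate polynomials
   g : {poly {poly k}} (outer variable = y, inner variable = x), reduced
   modulo the monic (in y) polynomial P = y^p - y - f(x).  A differential
   g dx with g in A is represented by g. *)

Definition AS_d (p : nat) : nat := (p ^ 2 + 1)%N.

Definition AS_f (k : fieldType) (p : nat) : {poly k} :=
  - 'X ^+ (AS_d p) - 'X ^+ ((AS_d p)./2 + p)%N.

Definition AS_eq (k : fieldType) (p : nat) : {poly {poly k}} :=
  'X ^+ p - 'X - (AS_f k p)%:P.

Definition xA (k : fieldType) : {poly {poly k}} := ('X : {poly k})%:P.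
Definition yA (k : fieldType) : {poly {poly k}} := 'X.

(* y^i x^j dx is in B_X : 0 <= i <= p-2, 0 <= j <= ceil((p-i-1)D/p) - 2 *)
Definition in_BX (p D i j : nat) : bool :=
  ((i <= p - 2) && (j.+2 <= ((p - i - 1) * D + p - 1) %/ p))%N.

(* C is the Cartier operator on A dx (acting on representatives):
   well defined on A, additive, p^{-1}-semilinear (C(h^p a) = h C(a)),
   C(x^{p-1} dx) = dx, C(x^n dx) = 0 for n <> -1 mod p.
   Outputs are reduced normal forms. These rules determine C uniquely. *)
Definition is_Cartier (k : fieldType) (p : nat)
    (C : {poly {poly k}} -> {poly {poly k}}) : Prop :=
  [/\ forall a, C a = C (a %% AS_eq k p),
      forall a b, C (a + b) = C a + C b,
      forall h a, C (h ^+ p * a) = (h * C a) %% AS_eq k p,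
      C (xA k ^+ p.-1) = 1 &
      forall n : nat, ~~ (p %| n.+1)%N -> C (xA k ^+ n) = 0].

Definition largest_term_is (k : fieldType) (w : {poly {poly k}}) (i0 j0 : nat)
  : Prop :=
  (w`_i0)`_j0 != 0 /\
  (forall i j : nat, (i0 < i)%N \/ (i = i0 /\ (j0 < j)%N) -> (w`_i)`_j = 0).

(* Main.v *)
Require Import Defs.
From mathcomp Require Import all_boot all_algebra.
From mathcomp Require Import zify ring.
Import GRing.Theory.

Lemma no_mid p a b c : 0 < c < p -> p * a <> p * b + c.
Proof.
move=> /andP[c0 cp] E.
case: (leqP a b) => ab.
  have : p * a <= p * b by rewrite leq_mul2l ab orbT.
  lia.
have : p * b.+1 <= p * a by rewrite leq_mul2l ab orbT.
rewrite mulnS. lia.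
Qed.

Lemma mod_eq p X Y a b : a < p -> b < p -> p * X + b = p * Y + a -> a = b.
Proof.
move=> ap bp E.
have := congr1 (modn^~ p) E.
by rewrite !(mulnC p) !modnMDl !modn_small.
Qed.

Lemma fact_ndvd p n : prime p -> n < p -> ~~ (p %| n`!).
Proof.
move=> pp; elim: n => [|n IH] np; first by rewrite fact0 dvdn1; case: (p) pp np => [|[]].
rewrite factS Euclid_dvdM // negb_or IH ?andbT; last lia.
apply/negP => /dvdn_leq; lia.
Qed.

Lemma bin_ndvd p a b : prime p -> a < p -> b <= a -> ~~ (p %| 'C(a, b)).
Proof.
move=> pp ap ba; apply/negP => H.
have := @fact_ndvd p a pp ap; rewrite -(bin_fact ba).
by rewrite dvdn_mulr.
Qed.

Lemma caseB q Rm l : 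
  2*l*(2*q+1) <= (4*q*q+4*q+2) * (2*Rm + 1) -> Rm < q ->
  (2*q+1)*l <= (4*q*q+4*q+2)*Rm + 2*q*q + q.
Proof.
move=> hl hRm.
rewrite leqNgt; apply/negP => hc.
have hl2 : (2*q+1)*l <= (4*q*q+4*q+2)*Rm + 2*q*q + 2*q + 1 by lia.
have : (2*q+1)*l = (2*q+1)*((2*q+1)*Rm + q) + (Rm + ((2*q+1)*l - ((4*q*q+4*q+2)*Rm + 2*q*q + q))).
  lia.
apply: no_mid; lia.
Qed.

Lemma arith q k0 l : k0 < q ->
  2*l*(2*q+1) <= (4*q*q+4*q+2) * (2*q+1 - 2 - 2*k0) ->
  exists R t0 n, [/\ k0 + R < q, t0 <= R <= t0.+1,
    n + (4*q*q+4*q+2)*t0 + (2*q*q+4*q+2)*(R-t0) = (2*q+1)*l + (2*q+1) - 1 &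
    (n+2)*(2*q+1) <= ((2*q+1) - (k0+R) - 1)*(4*q*q+4*q+2) + (2*q+1) - 1].
Proof.
move=> kq hl.
have [Rm hRm] : exists Rm, Rm = q - 1 - k0 by eexists.
have h2 : 2*q+1 - 2 - 2*k0 = 2*Rm+1 by lia.
rewrite h2 in hl.
have hRq : Rm < q by lia.
case: (leqP ((4*q*q+4*q+2)*Rm) ((2*q+1)*l + (2*q+1) - 1)) => hB.
- have hl3 := @caseB q Rm l hl hRq.
  exists Rm, Rm, ((2*q+1)*l + (2*q+1) - 1 - (4*q*q+4*q+2)*Rm); split.
  + lia.
  + by rewrite leqnn leqnSn.
  + by rewrite subnn muln0 addn0 subnK.
  + have hn : (2*q+1)*l + (2*q+1) - 1 - (4*q*q+4*q+2)*Rm + 2 <= 2*q*q + 3*q + 2 by lia.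
    have hm : 2*q+1 - (k0 + Rm) - 1 = q + 1 by lia.
    rewrite hm.
    apply: (leq_trans (leq_mul hn (leqnn (2*q+1)))).
    clear; nia.
- have dpos : 0 < 4*q*q+4*q+2 by lia.
  move: ((2*q+1)*l + (2*q+1) - 1) hB => L hB.
  have [R hR] : exists R, R = L %/ (4*q*q+4*q+2) by eexists.
  have hR1 : R * (4*q*q+4*q+2) <= L by rewrite hR leq_trunc_div.
  have hR2 : L < R.+1 * (4*q*q+4*q+2) by rewrite hR -ltn_divLR.
  have hR3 : R < Rm by rewrite hR ltn_divLR // mulnC.
  case: (ltnP L ((4*q*q+4*q+2)*R + (2*q*q+4*q+2))) => hA.
  + exists R, R, (L - (4*q*q+4*q+2)*R); split.
    * lia.
    * by rewrite leqnn leqnSn.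
    * rewrite subnn muln0 addn0 subnK //; lia.
    * have hn : L - (4*q*q+4*q+2)*R + 2 <= 2*q*q+4*q+3 by lia.
      have hm : q + 2 <= 2*q+1 - (k0 + R) - 1 by lia.
      apply: (leq_trans (leq_mul hn (leqnn (2*q+1)))).
      apply: (@leq_trans ((q+2)*(4*q*q+4*q+2))); first by clear; nia.
      apply: (@leq_trans ((2*q+1 - (k0 + R) - 1)*(4*q*q+4*q+2))); [by rewrite leq_mul2r hm orbT | lia].
  + exists R.+1, R, (L - (4*q*q+4*q+2)*R - (2*q*q+4*q+2)); split.
    * lia.
    * by rewrite leqnSn leqnn.
    * have -> : R.+1 - R = 1 by lia.
      rewrite muln1; lia.
    * have hn : L - (4*q*q+4*q+2)*R - (2*q*q+4*q+2) + 2 <= 2*q*q + 1 by lia.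
      have hm : q + 1 <= 2*q+1 - (k0 + R.+1) - 1 by lia.
      apply: (leq_trans (leq_mul hn (leqnn (2*q+1)))).
      apply: (@leq_trans ((q+1)*(4*q*q+4*q+2))); first by clear; nia.
      apply: (@leq_trans ((2*q+1 - (k0 + R.+1) - 1)*(4*q*q+4*q+2))); [by rewrite leq_mul2r hm orbT | lia].
Qed.

Lemma ndiv q R t0 n l r t :
  n + (4*q*q+4*q+2)*t0 + (2*q*q+4*q+2)*(R-t0) = (2*q+1)*l + (2*q+1) - 1 ->
  t0 <= R <= t0.+1 -> R < q -> t <= r <= R -> (r < R) || (t != t0) ->
  ~~ ((2*q+1) %| (n + (4*q*q+4*q+2)*t + (2*q*q+4*q+2)*(r-t)).+1).
Proof.
move=> hE /andP[h1 h2] hRq /andP[h3 h4] h5.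
apply/negP => /dvdnP [w hw].
move: hE hw h5 h2 h4 hRq.
have [s0 ->] : exists s0, R = t0 + s0 by exists (R - t0); lia.
have [s ->] : exists s, r = t + s by exists (r - t); lia.
rewrite !addKn => hE hw h5 h2 h4 hRq.
have hid : (2*q+1) * (2*w + (2*q+1)*(t0+s0+t0) + 2*s0) + (t0+s0+t0) =
           (2*q+1) * (2*(l+1) + (2*q+1)*(t+s+t) + 2*s) + (t+s+t).
  lia.
have ha : t+s+t < 2*q+1 by lia.
have hb : t0+s0+t0 < 2*q+1 by lia.
have := @mod_eq _ _ _ _ _ ha hb hid; lia.
Qed.
Local Open Scope ring_scope.

Section Alg.
Variables (k : fieldType) (p : nat) (C : {poly {poly k}} -> {poly {poly k}}).
Hypothesis Hp : (1 < p)%N.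
Hypothesis HC : is_Cartier k p C.
Local Notation P := (AS_eq k p).

Lemma sizeP : size P = p.+1.
Proof.
have hX := size_polyXn {poly k} p.
rewrite /AS_eq -addrA size_addl ?hX //.
rewrite ltnS.
apply: leq_trans (size_polyD _ _) _.
rewrite !size_opp size_polyX.
by rewrite geq_max (leq_trans (size_polyC_leq1 _)) //; lia.
Qed.

Lemma leadP : lead_coef P = 1.
Proof.
have hX := size_polyXn {poly k} p.
rewrite /AS_eq -addrA lead_coefDl ?lead_coefXn //.
rewrite hX ltnS.
apply: leq_trans (size_polyD _ _) _.
rewrite !size_opp size_polyX.
by rewrite geq_max (leq_trans (size_polyC_leq1 _)) //; lia.
Qed.

Lemma modP_small (a : {poly {poly k}}) : (size a <= p)%N -> a %% P = a.
Proof. by move=> h; rewrite modp_small // sizeP ltnS. Qed.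

Lemma modP_addMl (a b : {poly {poly k}}) : (a + b * P) %% P = a %% P.
Proof.
have u : lead_coef P \is a GRing.unit by rewrite leadP unitr1.
by rewrite (Pdiv.IdomainUnit.modpD u) modp_mull addr0.
Qed.

Lemma Ceq (a b : {poly {poly k}}) : a %% P = b %% P -> C a = C b.
Proof. by case: HC => H1 _ _ _ _ E; rewrite H1 E -H1. Qed.

Lemma CD (a b : {poly {poly k}}) : C (a + b) = C a + C b.
Proof. by case: HC. Qed.

Lemma C0 : C 0 = 0.
Proof. by have := CD 0 0; rewrite addr0 => /(congr1 (fun x => x - C 0)); rewrite subrr addrK. Qed.

Lemma Csum (I : finType) (F : I -> {poly {poly k}}) :
  C (\sum_i F i) = \sum_i C (F i).
Proof.
apply: (big_morph C CD C0).
Qed.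

Lemma CMn (a : {poly {poly k}}) n : C (a *+ n) = C a *+ n.
Proof. elim: n => [|n IH]; by rewrite ?mulr0n ?C0 // !mulrS CD IH. Qed.

Lemma Cfrob (h a : {poly {poly k}}) : C (h ^+ p * a) = (h * C a) %% P.
Proof. by case: HC. Qed.

Definition cx (N : nat) : {poly k} :=
  if (p %| N.+1)%N then 'X^((N.+1 %/ p).-1) else 0.

Lemma xAX N : xA k ^+ N = ('X^N)%:P.
Proof. by rewrite /xA rmorphXn. Qed.

Lemma CxN N : C (xA k ^+ N) = (cx N)%:P.
Proof.
have hN := divn_eq N p.
rewrite /cx {1}hN exprD exprM Cfrob.
have hs : (N %% p < p)%N by rewrite ltn_mod; lia.
case: HC => _ _ _ H4 H5.
case: (eqVneq (N %% p)%N p.-1) => hm.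
- rewrite hm H4 mulr1 modP_small; last by rewrite xAX size_polyC; case: (_ != 0); lia.
  have -> : (N.+1 = (N %/ p).+1 * p)%N by lia.
  rewrite dvdn_mull // mulnK; last lia.
  by rewrite xAX.
- rewrite H5 ?mulr0 ?mod0p.
  + have -> : (N.+1 = N %/ p * p + (N %% p).+1)%N by lia.
    rewrite dvdn_addr ?dvdn_mull //.
    rewrite (negbTE (_ : ~~ (p %| (N %% p).+1)%N)) //.
    apply/negP => /dvdn_leq; lia.
  + apply/negP => /dvdn_leq; lia.
Qed.


Local Notation d := (AS_d p).
Local Notation e := ((AS_d p)./2 + p)%N.

Definition cc (m n j : nat) : {poly k} :=
  \sum_(t < (m-j).+1) cx (n + d * t + e * (m - j - t))%N *+ 'C(m-j, t).

Lemma yP : yA k ^+ p + (xA k ^+ e + xA k ^+ d) = yA k + P.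
Proof.
rewrite /AS_eq /AS_f rmorphB rmorphN !rmorphXn -/(xA k) -/(yA k).
move: (yA k ^+ p) (xA k ^+ AS_d p) (xA k ^+ ((AS_d p)./2 + p)) (yA k) => a b c y.
ring.
Qed.

Lemma congrP (u c : {poly {poly k}}) m : ((u + P) ^+ m * c) %% P = (u ^+ m * c) %% P.
Proof.
have [b ->] : exists b, (u + P) ^+ m = u ^+ m + b * P.
  elim: m => [|m [b IH]]; first by exists 0; rewrite !expr0 mul0r addr0.
  exists (u ^+ m + b * u + b * P); rewrite !exprS IH.
  move: (u ^+ m) => v; ring.
by rewrite mulrDl -mulrA (mulrC P) mulrA modP_addMl.
Qed.

Lemma CG r n : C ((xA k ^+ e + xA k ^+ d) ^+ r * xA k ^+ n) =
  (\sum_(t < r.+1) cx (n + d * t + e * (r - t))%N *+ 'C(r, t))%:P.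
Proof.
rewrite exprDn mulr_suml Csum rmorph_sum; apply: eq_bigr => t _.
rewrite mulrnAl CMn rmorphMn; congr (_ *+ _).
rewrite -!exprM -!exprD.
have -> : (e * (r - t) + d * t + n = n + d * t + e * (r - t))%N by lia.
by rewrite CxN.
Qed.

Lemma Cform m n : (m < p)%N ->
  C (yA k ^+ m * xA k ^+ n) = \sum_(j < m.+1) (yA k ^+ j * (cc m n j)%:P) *+ 'C(m, j).
Proof.
move=> hm.
rewrite (@Ceq _ ((yA k ^+ p + (xA k ^+ e + xA k ^+ d)) ^+ m * xA k ^+ n)); last first.
  by rewrite yP congrP.
rewrite addrC exprDn mulr_suml Csum; apply: eq_bigr => [[j hj]] _ /=.
rewrite mulrnAl CMn; congr (_ *+ _).
rewrite -exprM mulnC exprM mulrAC mulrC Cfrob CG modP_small //.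
apply: leq_trans (size_polyMleq _ _) _.
rewrite (size_polyXn _ j).
have := size_polyC_leq1 (cc m n j); rewrite /cc.
move: (size _) => z; lia.
Qed.


Lemma coef_w m n i :
  (\sum_(j < m.+1) (yA k ^+ j * (cc m n j)%:P) *+ 'C(m, j))`_i =
  if (i <= m)%N then cc m n i *+ 'C(m, i) else 0.
Proof.
rewrite coef_sum.
rewrite (eq_bigr (fun j : 'I_m.+1 => if (j == i :> nat) then cc m n j *+ 'C(m, j) else 0)).
  by rewrite -big_mkcond (big_ord1_eq _ (fun j => cc m n j *+ 'C(m, j))) ltnS.
move=> j _; rewrite coefMn coefXnM coefC.
case: (eqVneq (j : nat) i) => [<-|ne]; first by rewrite ltnn subnn.
case: ltnP => hji; first by rewrite mul0rn.
case: eqP => [h|_]; [lia | by rewrite mul0rn].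
Qed.

Lemma cx0 N : ~~ (p %| N.+1)%N -> cx N = 0.
Proof. by rewrite /cx => /negbTE ->. Qed.

Lemma cxl N l : (N.+1 = p * l.+1)%N -> cx N = 'X^l.
Proof. by rewrite /cx => ->; rewrite dvdn_mulr // mulKn //; lia. Qed.

Lemma largest m n k0 R t0 l : m = (k0 + R)%N -> (m < p)%N ->
  (forall r t, (t <= r)%N -> (r <= R)%N -> (r < R)%N || (t != t0) ->
       ~~ (p %| (n + d*t + e*(r-t)).+1)%N) ->
  (t0 <= R)%N -> ((n + d*t0 + e*(R-t0)).+1 = p * l.+1)%N ->
  ('C(m,k0) * 'C(R,t0))%:R != 0 :> k ->
  largest_term_is k (C (yA k ^+ m * xA k ^+ n)) k0 l.
Proof.
move=> hm hmp H1 H3 H4 Hb.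
have hk0 : cc m n k0 = 'X^l *+ 'C(R, t0).
  rewrite /cc (_ : (m - k0 = R)%N); last lia.
  rewrite (eq_bigr (fun t : 'I_R.+1 => if (t == t0 :> nat) then 'X^l *+ 'C(R,t) else 0)).
    by rewrite -big_mkcond (big_ord1_eq _ (fun t => 'X^l *+ 'C(R,t))) ltnS H3.
  move=> [t ht] _ /=.
  case: (eqVneq t t0) => [->|ne]; first by rewrite (@cxl _ _ H4).
  by rewrite cx0 ?mul0rn //; apply: H1; rewrite ?leqnn ?ne ?orbT //; lia.
rewrite Cform //; split.
  rewrite coef_w (_ : (k0 <= m)%N); last lia.
  by rewrite hk0 !coefMn coefXn eqxx -mulrnA mulnC.

move=> i j [hi|[-> hj]].
  rewrite coef_w; case: ifP => him; last by rewrite coef0.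
  rewrite /cc big1 ?mul0rn ?coef0 // => [[t ht]] _ /=.
  by rewrite cx0 ?mul0rn //; apply: H1; lia.
rewrite coef_w (_ : (k0 <= m)%N); last lia.
rewrite hk0 !coefMn coefXn (_ : (j == l) = false) ?mul0rn //.
apply/negbTE; lia.
Qed.
End Alg.

Theorem mainTheorem5 (k : closedFieldType) (p : nat)
  (C : {poly {poly k}} -> {poly {poly k}}) :
  prime p -> odd p -> p \in [pchar k] -> is_Cartier k p C ->
  forall k0 l : nat,
    (2 * k0 + 1 < p)%N ->
    (2 * l * p <= AS_d p * (p - 2 - 2 * k0))%N ->
    exists m n : nat,
      [/\ in_BX p (AS_d p) m n, (2 * m + 1 < p)%N &
          largest_term_is k (C (yA k ^+ m * xA k ^+ n)) k0 l].
Proof.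
move=> pp podd pch HC k0 l hk hl.
have Hp : (1 < p)%N by apply: prime_gt1.
have hq := odd_double_half p; rewrite podd in hq.
move: (p./2) hq => q hq.
have hp : p = (2*q+1)%N by rewrite -hq; lia.
have hd : AS_d p = (4*q*q+4*q+2)%N by rewrite /AS_d -mulnn hp; lia.
have he : ((AS_d p)./2 + p = 2*q*q+4*q+2)%N.
  rewrite hd (_ : (4*q*q+4*q+2 = (2*q*q+2*q+1).*2)%N); last lia.
  rewrite doubleK hp; lia.
have kq : (k0 < q)%N by lia.
rewrite hd hp in hl.
have [R [t0 [n [h1 h2 h3 h4]]]] := @arith q k0 l kq hl.
exists (k0 + R)%N, n; split.
- rewrite /in_BX hd; apply/andP; split; first lia.
  rewrite leq_divRL; last lia.
  rewrite hp; lia.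
- lia.
- apply: (@largest k p C Hp HC (k0 + R)%N n k0 R t0 l) => //.
  + lia.
  + move=> r t htr hrR hor; rewrite he hd hp.
    apply: (@ndiv q R t0 n l r t h3) => //; [lia | by rewrite htr hrR].
  + lia.
  + rewrite he hd hp; lia.
  + rewrite -(dvdn_pcharf pch) Euclid_dvdM // negb_or.
    rewrite !bin_ndvd //; lia.
Qed.
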